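(* Let $S$ be a semilocal generalized Krull domain with maximal ideals $\mathfrak{m}_1, \dots, \mathfrak{m}_n$, where $n \geq 2$ and $\operatorname{ht} \mathfrak{m}_j \geq 2$ for all $j$. Suppose each residue field $S/\mathfrak{m}_i$ is isomorphic to a fixed field $k$, and fix isomorphisms $\alpha_i : k \to S/\mathfrak{m}_i$. Let $J = \mathfrak{m}_1 \cap \cdots \cap \mathfrak{m}_n = \prod_j \mathfrak{m}_j$, let $p: S \to S/J$ be the canonical projection, and let $h : k \to S/J$ be the composition of $\lambda \mapsto (\alpha_1(\lambda), \dots, \alpha_n(\lambda)) \in \prod_{i=1}^n S/\mathfrak{m}_i$ with the Chinese Remainder isomorphism $\prod_i S/\mathfrak{m}_i \cong S/J$. Let $R$ be the pullback of $p$ and $h$, i.e. $R = \{(s,\lambda) \in S \times k : p(s) = h(\lambda)\}$ (identified with a subring of $S$). Then $R$ is local and perinormal; moreover $R$ is globally perinormal if $S$ is. However, $R$ is not integrally closed, since its integral closure is $S$.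
   Context: All rings are commutative with identity; ''local'' means having a unique maximal ideal; an overring of a domain $R$ is a ring between $R$ and its fraction field. A ring extension $A \subseteq B$ satisfies going-down if whenever $\mathfrak{p} \subset \mathfrak{q}$ are primes of $A$ and $Q$ is a prime of $B$ with $Q \cap A = \mathfrak{q}$, there is a prime $P \subseteq Q$ of $B$ with $P \cap A = \mathfrak{p}$. A domain $R$ is perinormal if every local overring $S$ of $R$ such that $R \subseteq S$ satisfies going-down is a localization of $R$; it is globally perinormal if every overring (local or not) $S$ of $R$ such that $R \subseteq S$ satisfies going-down is a localization of $R$ at a multiplicative set. A ring satisfies (R$_1$) if its localization at every height one prime is a valuation domain. A domain $R$ is a generalized Krull domain if (1) $R = \bigcap_{\mathfrak{p}} R_{\mathfrak{p}}$ over all height one primes $\mathfrak{p}$, (2) every nonzero element lies in only finitely many height one primes, and (3) $R$ satisfies (R$_1$). *)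

(* Defs.v *)
(* Commutative-algebra notions for subrings of a fixed field K,
   subsets of K being represented as predicates K -> Prop. *)
From HB Require Import structures.
From mathcomp Require Import all_boot all_order all_algebra.
Set Implicit Arguments. Unset Strict Implicit. Unset Printing Implicit Defensive.
Import GRing.Theory.
Local Open Scope ring_scope.

Section CommAlg.
Variable K : fieldType.
Implicit Types (A B I P Q M : K -> Prop).

Definition subset_ A B := forall x, A x -> B x.
Definition seteq A B := forall x, A x <-> B x.
Definition ssubset A B := subset_ A B /\ exists x, B x /\ ~ A x.

(* A is a subring (with 1) of K; such a ring is automatically a domain. *)
Definition subring A :=
  [/\ A 1, (forall x y, A x -> A y -> A (x - y)) & (forall x y, A x -> A y -> A (x * y))].

Definition frac A : K -> Prop :=
  fun x => exists a b, [/\ A a, A b, b != 0 & x = a / b].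

Definition ideal A I :=
  [/\ subset_ I A, I 0, (forall x y, I x -> I y -> I (x + y))
    & (forall a x, A a -> I x -> I (a * x))].

Definition prime_ideal A P :=
  [/\ ideal A P, ~ P 1 & (forall x y, A x -> A y -> P (x * y) -> P x \/ P y)].

Definition maximal_ideal A P :=
  [/\ ideal A P, ~ P 1 & (forall I, ideal A I -> subset_ P I -> I 1 \/ seteq I P)].

Definition local_ring A :=
  exists P, maximal_ideal A P /\ forall Q, maximal_ideal A Q -> seteq Q P.

Definition mult_set A M :=
  [/\ subset_ M A, M 1, ~ M 0 & (forall x y, M x -> M y -> M (x * y))].

Definition localization A M : K -> Prop :=
  fun x => exists a s, [/\ A a, M s & x = a / s].

Definition loc_at_prime A P : K -> Prop :=
  localization A (fun x => A x /\ ~ P x).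

Definition is_localization A T :=
  exists M, mult_set A M /\ seteq T (localization A M).

Definition overring A T := [/\ subring T, subset_ A T & subset_ T (frac A)].

Definition going_down A B :=
  forall p q, prime_ideal A p -> prime_ideal A q -> subset_ p q ->
  forall Q, prime_ideal B Q -> seteq (fun x => Q x /\ A x) q ->
  exists P, [/\ prime_ideal B P, subset_ P Q & seteq (fun x => P x /\ A x) p].

Definition perinormal A :=
  forall T, overring A T -> local_ring T -> going_down A T -> is_localization A T.

Definition globally_perinormal A :=
  forall T, overring A T -> going_down A T -> is_localization A T.

Definition zero_set : K -> Prop := fun x => x = 0.

Definition height_one A P :=
  [/\ prime_ideal A P, exists x, P x /\ x <> 0 &
      forall Q, prime_ideal A Q -> subset_ Q P -> subset_ Q zero_set \/ seteq Q P].

Definition height_ge2 A P :=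
  exists Q0 Q1, [/\ prime_ideal A Q0, prime_ideal A Q1, ssubset Q0 Q1 & ssubset Q1 P].

Definition valuation_domain A :=
  forall x, frac A x -> x != 0 -> A x \/ A x^-1.

Definition generalized_Krull A :=
  [/\ seteq A (fun x => frac A x /\ forall P, height_one A P -> loc_at_prime A P x),
      (forall x, A x -> x != 0 -> exists (N : nat) (f : nat -> K -> Prop),
          forall P, height_one A P -> P x -> exists i, (i < N)%N /\ seteq P (f i))
    & (forall P, height_one A P -> valuation_domain (loc_at_prime A P))].

Definition integral_over A (x : K) :=
  exists p : {poly K}, [/\ p \is monic, (forall i, A p`_i) & root p x].

Definition integral_closure A : K -> Prop :=
  fun x => frac A x /\ integral_over A x.

Definition integrally_closed A :=
  forall x, frac A x -> integral_over A x -> A x.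

End CommAlg.

(* The pullback ring R = {(s, l) : p(s) = h(l)}, identified with its (injective)
   image in S: given lifts a i : k -> K of the isomorphisms alpha_i : k -> S/m_i,
   s in S lies in R iff for some l, s ≡ a i l (mod m_i) for every i
   (this is p(s) = h(l) after the Chinese Remainder isomorphism). *)
Definition pullback_ring (K k : fieldType) (n : nat) (S : K -> Prop)
  (m : 'I_n -> K -> Prop) (a : 'I_n -> k -> K) : K -> Prop :=
  fun s => S s /\ exists l : k, forall i, m i (s - a i l).

(* a : k -> K induces a ring isomorphism k -> S/m (a is a lift into S). *)
Definition residue_iso (K k : fieldType) (S m : K -> Prop) (a : k -> K) :=
  (forall l, S (a l)) /\
  [/\ (forall l u, m (a (l + u) - (a l + a u))),
      (forall l u, m (a (l * u) - a l * a u)),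
      m (a 1 - 1),
      (forall l, m (a l) -> l = 0)
    & (forall s, S s -> exists l, m (s - a l))].

(* Main.v *)
Require Import Defs.
From mathcomp Require Import all_boot all_order all_algebra.
From mathcomp Require Import ring zify.
From mathcomp Require classical_sets.
From Stdlib Require Import Classical.
Set Implicit Arguments. Unset Strict Implicit. Unset Printing Implicit Defensive.
Import GRing.Theory.
Local Open Scope ring_scope.

Section Gen.
Variable K : fieldType.
Implicit Types (A B I P Q M : K -> Prop) (x y z a b s t : K).

Lemma sr1 A : subring A -> A 1. Proof. by case. Qed.
Lemma srB A x y : subring A -> A x -> A y -> A (x - y). Proof. by case=> _ h _; apply: h. Qed.
Lemma sr0 A : subring A -> A 0.
Proof. by move=> hA; rewrite -(subrr 1); apply: (srB hA) => //; apply: (sr1 hA). Qed.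
Lemma srN A x : subring A -> A x -> A (- x).
Proof. by move=> hA hx; rewrite -sub0r; apply: (srB hA) => //; apply: (sr0 hA). Qed.
Lemma srD A x y : subring A -> A x -> A y -> A (x + y).
Proof. by move=> hA hx hy; rewrite -(opprK y); apply: (srB hA) => //; apply: (srN hA). Qed.
Lemma srM A x y : subring A -> A x -> A y -> A (x * y). Proof. by case=> _ _ h; apply: h. Qed.
Lemma srX A x e : subring A -> A x -> A (x ^+ e).
Proof. move=> hA hx; elim: e => [|e IH]; first by rewrite expr0; apply: (sr1 hA).
by rewrite exprS; apply: (srM hA). Qed.
Lemma sr_prod A (I : Type) (r : seq I) (P : pred I) (F : I -> K) :
  subring A -> (forall i, P i -> A (F i)) -> A (\prod_(i <- r | P i) F i).
Proof. move=> hA hF; elim/big_rec: _ => [|i w Pi IH]; first exact: (sr1 hA).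
by apply: (srM hA) => //; apply: hF. Qed.
Lemma sr_sum A (I : Type) (r : seq I) (P : pred I) (F : I -> K) :
  subring A -> (forall i, P i -> A (F i)) -> A (\sum_(i <- r | P i) F i).
Proof. move=> hA hF; elim/big_rec: _ => [|i w Pi IH]; first exact: (sr0 hA).
by apply: (srD hA) => //; apply: hF. Qed.

Lemma idl_sub A I x : ideal A I -> I x -> A x. Proof. by case=> h _ _ _; apply: h. Qed.
Lemma idl0 A I : ideal A I -> I 0. Proof. by case. Qed.
Lemma idlD A I x y : ideal A I -> I x -> I y -> I (x + y). Proof. by case=> _ _ h _; apply: h. Qed.
Lemma idlM A I a x : ideal A I -> A a -> I x -> I (a * x). Proof. by case=> _ _ _ h; apply: h. Qed.
Lemma idlMr A I a x : ideal A I -> I x -> A a -> I (x * a).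
Proof. by move=> h hx ha; rewrite mulrC; apply: (idlM h). Qed.
Lemma idlN A I x : subring A -> ideal A I -> I x -> I (- x).
Proof. move=> hA h hx; rewrite -mulN1r; apply: (idlM h) => //; apply: (srN hA) => //; exact: (sr1 hA). Qed.
Lemma idlB A I x y : subring A -> ideal A I -> I x -> I y -> I (x - y).
Proof. by move=> hA h hx hy; apply: (idlD h) => //; apply: (idlN hA h). Qed.
Lemma prime_prod A P (I : Type) (r : seq I) (Q : pred I) (F : I -> K) :
  subring A -> prime_ideal A P -> (forall i, Q i -> A (F i) /\ ~ P (F i)) ->
  A (\prod_(i <- r | Q i) F i) /\ ~ P (\prod_(i <- r | Q i) F i).
Proof.
move=> hA [hI h1 hp] hF; apply: (big_rec (fun w => A w /\ ~ P w)) => [|i w Qi [hw hw']].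
  by split=> //; apply: (sr1 hA).
have [hAi hPi] := hF i Qi; split; first by apply: (srM hA).
by move/(hp _ _ hAi hw)=> [].
Qed.


Lemma frac_in A x : subring A -> A x -> Defs.frac A x.
Proof. move=> hA hx; exists x, 1; split=> //; [exact: (sr1 hA)|exact: oner_neq0|by rewrite divr1]. Qed.
Lemma frac_mono A B x : subset_ A B -> Defs.frac A x -> Defs.frac B x.
Proof. by move=> hAB [a [b [ha hb hb0 ->]]]; exists a, b; split=> //; apply: hAB. Qed.
Lemma frac_trans A B x : subring A -> subset_ B (Defs.frac A) -> Defs.frac B x -> Defs.frac A x.
Proof.
move=> hA hB [a [b [ha hb hb0 ->]]].
have [a1 [a2 [h1 h2 h20 ->]]] := hB _ ha.
have [b1 [b2 [h3 h4 h40 eb]]] := hB _ hb.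
have hb1 : b1 != 0 by apply: contraNneq hb0; rewrite eb => ->; rewrite mul0r.
exists (a1 * b2), (a2 * b1); split; [exact: (srM hA)|exact: (srM hA)|by rewrite mulf_neq0|].
rewrite eb; field; by rewrite h20 h40 hb1.
Qed.

Lemma ms_nz A M s : mult_set A M -> M s -> s != 0.
Proof. by case=> _ _ h0 _ hs; apply/eqP=> e; apply: h0; rewrite -e. Qed.
Lemma ms_sub A M s : mult_set A M -> M s -> A s. Proof. by case=> h _ _ _; apply: h. Qed.
Lemma ms_mul A M s t : mult_set A M -> M s -> M t -> M (s * t). Proof. by case=> _ _ _ h; apply: h. Qed.
Lemma ms1 A M : mult_set A M -> M 1. Proof. by case. Qed.

Lemma loc_in A M x : mult_set A M -> A x -> localization A M x.
Proof. by move=> hM hx; exists x, 1; split=> //; [exact: (ms1 hM)|rewrite divr1]. Qed.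
Lemma loc_inv A M s : subring A -> mult_set A M -> M s -> localization A M s^-1.
Proof. by move=> hA hM hs; exists 1, s; split=> //; [exact: (sr1 hA)|rewrite div1r]. Qed.
Lemma loc_sub A M : subring A -> mult_set A M -> subring (localization A M).
Proof.
move=> hA hM; split.
- by apply: loc_in => //; exact: (sr1 hA).
- move=> _ _ [a [s [ha hs ->]]] [b [t [hb ht ->]]].
  have s0 := ms_nz hM hs; have t0 := ms_nz hM ht.
  exists (a * t - b * s), (s * t); split; last by field; rewrite s0 t0.
    by apply: (srB hA) => //; apply: (srM hA) => //; apply: (ms_sub hM).
  exact: (ms_mul hM).
- move=> _ _ [a [s [ha hs ->]]] [b [t [hb ht ->]]].
  have s0 := ms_nz hM hs; have t0 := ms_nz hM ht.
  exists (a * b), (s * t); split; last by field; rewrite s0 t0.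
    exact: (srM hA). exact: (ms_mul hM).
Qed.
Lemma loc_frac A M x : mult_set A M -> localization A M x -> Defs.frac A x.
Proof. move=> hM [a [s [ha hs ->]]]; exists a, s; split=> //; [exact: (ms_sub hM)|exact: (ms_nz hM)]. Qed.
Lemma loc_mono A M x : mult_set A M -> A x -> localization A M x.
Proof. exact: loc_in. Qed.

Lemma prime_compl A P : subring A -> prime_ideal A P -> mult_set A (fun x => A x /\ ~ P x).
Proof.
move=> hA [hI h1 hp]; split.
- by move=> x [].
- by split=> //; exact: (sr1 hA).
- by case=> _; apply; exact: (idl0 hI).
- move=> x y [hx hx'] [hy hy']; split; first exact: (srM hA).
  by case/(hp _ _ hx hy).
Qed.

Lemma max_prime A M : subring A -> maximal_ideal A M -> prime_ideal A M.
Proof.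
move=> hA [hI h1 hmax]; split=> // x y hx hy hxy.
case: (classic (M x)) => hMx; [by left|right].
pose I z := exists u c, [/\ M u, A c & z = u + c * x].
have hI' : ideal A I.
  split.
  - move=> z [u [c [hu hc ->]]]; apply: (srD hA); [exact: (idl_sub hI)|exact: (srM hA)].
  - by exists 0, 0; split; [exact: (idl0 hI)|exact: (sr0 hA)|rewrite mul0r addr0].
  - move=> z w [u [c [hu hc ->]]] [u' [c' [hu' hc' ->]]].
    exists (u + u'), (c + c'); split; [exact: (idlD hI)|exact: (srD hA)|ring].
  - move=> a0 z ha0 [u [c [hu hc ->]]].
    exists (a0 * u), (a0 * c); split; [exact: (idlM hI)|exact: (srM hA)|ring].
have hsub : subset_ M I.
  by move=> z hz; exists z, 0; split=> //; [exact: (sr0 hA)|rewrite mul0r addr0].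
case: (hmax I hI' hsub) => [[u [c [hu hc e]]]|heq].
  have -> : y = y * (u + c * x) by rewrite -e mulr1.
  have -> : y * (u + c * x) = y * u + c * (x * y) by ring.
  apply: (idlD hI); first exact: (idlM hI).
  exact: (idlM hI).
exfalso; apply: hMx; apply/heq.
by exists 0, 1; split; [exact: (idl0 hI)|exact: (sr1 hA)|rewrite mul1r add0r].
Qed.

Lemma contr_prime A B P : subring A -> subring B -> subset_ A B -> prime_ideal B P ->
  prime_ideal A (fun x => P x /\ A x).
Proof.
move=> hA hB hAB [hI h1 hp]; split.
- split.
  + by move=> x [].
  + by split; [exact: (idl0 hI)|exact: (sr0 hA)].
  + by move=> x y [hx hx'] [hy hy']; split; [exact: (idlD hI)|exact: (srD hA)].
  + by move=> a0 x ha [hx hx']; split; [apply: (idlM hI) => //; apply: hAB|exact: (srM hA)].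
- by case.
- move=> x y hx hy [hxy _]; case: (hp x y (hAB _ hx) (hAB _ hy) hxy) => h; [left|right]; by split.
Qed.


Lemma cross x1 y1 x2 y2 : y1 != 0 -> y2 != 0 -> x1 / y1 = x2 / y2 -> x1 * y2 = x2 * y1.
Proof.
move=> h1 h2 e; have := congr1 (fun w => w * (y1 * y2)) e => /=.
have -> : x1 / y1 * (y1 * y2) = x1 * y2 by field.
have -> : x2 / y2 * (y1 * y2) = x2 * y1 by field.
done.
Qed.

Definition ext M P : K -> Prop := fun x => exists a s, [/\ P a, M s & x = a / s].

Lemma ext_in A M P x : mult_set A M -> P x -> ext M P x.
Proof. by move=> hM hx; exists x, 1; split=> //; [exact: (ms1 hM)|rewrite divr1]. Qed.

Lemma ext_contr A M P x : subring A -> mult_set A M -> prime_ideal A P ->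
  (forall s, M s -> ~ P s) -> A x -> ext M P x -> P x.
Proof.
move=> hA hM [hI h1 hp] hMP hx [a [s [ha hs e]]].
have s0 := ms_nz hM hs.
have : P (x * s) by rewrite e divfK.
by case/(hp _ _ hx (ms_sub hM hs)) => // /hMP.
Qed.

Lemma ext_prime A M P : subring A -> mult_set A M -> prime_ideal A P ->
  (forall s, M s -> ~ P s) -> prime_ideal (localization A M) (ext M P).
Proof.
move=> hA hM hP hMP; have [hI h1 hp] := hP; split.
- split.
  + move=> _ [a [s [ha hs ->]]]; exists a, s; split=> //; exact: (idl_sub hI).
  + exact: (ext_in hM (idl0 hI)).
  + move=> _ _ [a [s [ha hs ->]]] [b [t [hb ht ->]]].
    have s0 := ms_nz hM hs; have t0 := ms_nz hM ht.
    exists (a * t + b * s), (s * t); split; last by field; rewrite s0 t0.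
      by apply: (idlD hI); apply: (idlMr hI) => //; apply: (ms_sub hM).
    exact: (ms_mul hM).
  + move=> _ _ [c [u [hc hu ->]]] [a [s [ha hs ->]]].
    have s0 := ms_nz hM hs; have u0 := ms_nz hM hu.
    exists (c * a), (u * s); split; last by field; rewrite s0 u0.
      exact: (idlM hI). exact: (ms_mul hM).
- move=> [a [s [ha hs e]]]; have s0 := ms_nz hM hs.
  apply: (hMP _ hs); suff -> : s = a by [].
  by rewrite -[a](divfK s0) -e mul1r.
- move=> _ _ [c [u [hc hu ->]]] [d [v [hd hv ->]]] [a [s [ha hs e]]].
  have s0 := ms_nz hM hs; have u0 := ms_nz hM hu; have v0 := ms_nz hM hv.
  have e' : (c * d) / (u * v) = a / s by rewrite -e; field; rewrite u0 v0.
  have e2 := cross (mulf_neq0 u0 v0) s0 e'.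
  have : P (c * d * s) by rewrite e2; apply: (idlMr hI) => //; apply: (srM hA); apply: (ms_sub hM).
  case/(hp _ _ (srM hA hc hd) (ms_sub hM hs)); last by move/hMP.
  case/(hp _ _ hc hd) => h; [left|right].
    by exists c, u.
  by exists d, v.
Qed.

Lemma ideal_ext A I I' : seteq I I' -> ideal A I -> ideal A I'.
Proof.
move=> e [h1 h2 h3 h4]; split.
- by move=> x /e; apply: h1.
- by apply/e.
- by move=> x y /e hx /e hy; apply/e; apply: h3.
- by move=> a0 x ha /e hx; apply/e; apply: h4.
Qed.

Lemma exists_max A I0 : subring A -> ideal A I0 -> ~ I0 1 ->
  exists M, maximal_ideal A M /\ subset_ I0 M.
Proof.
move=> hA hI0 h10.
pose PP (X : K -> Prop) := ideal A (fun x => X x \/ I0 x) /\ ~ (X 1 \/ I0 1).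
have [A0 [[hid h1] hmax]] : exists A0, PP A0 /\ (forall B, classical_sets.proper A0 B -> ~ PP B).
  apply: classical_sets.Zorn_bigcup => F hF htot.
  rewrite /classical_sets.bigcup /=.
  have hU : forall x, (exists2 X, F X & X x) \/ I0 x -> A x.
    move=> x [[X FX Xx]|hx]; last exact: (idl_sub hI0).
    by have [[h _ _ _] _] := hF X FX; apply: h; left.
  split; last first.
    case=> [[X FX Xx]|//]; have [_ h] := hF X FX; by apply: h; left.
  split.
  - exact: hU.
  - by right; apply: (idl0 hI0).
  - move=> x y [[X FX Xx]|hx] [[Y FY Yy]|hy].
    + have [XY|YX] := htot X Y FX FY.
        have [[_ _ h _] _] := hF Y FY.
        case: (h x y (or_introl (XY _ Xx)) (or_introl Yy)) => ?; [left; by exists Y|by right].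
      have [[_ _ h _] _] := hF X FX.
      case: (h x y (or_introl Xx) (or_introl (YX _ Yy))) => ?; [left; by exists X|by right].
    + have [[_ _ h _] _] := hF X FX.
      case: (h x y (or_introl Xx) (or_intror hy)) => ?; [left; by exists X|by right].
    + have [[_ _ h _] _] := hF Y FY.
      case: (h x y (or_intror hx) (or_introl Yy)) => ?; [left; by exists Y|by right].
    + by right; apply: (idlD hI0).
  - move=> a0 x ha [[X FX Xx]|hx].
      have [[_ _ _ h] _] := hF X FX.
      case: (h a0 x ha (or_introl Xx)) => ?; [left; by exists X|by right].
    by right; apply: (idlM hI0).
exists (fun x => A0 x \/ I0 x); split; last by move=> x; right.
split=> // I hI hsub.
case: (classic (I 1)) => [|hn1]; [by left|right].
have hPI : PP I.
  split.
    apply: (ideal_ext _ hI) => x; split; [by left|by case=> // /(fun h => hsub _ (or_intror h))].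
  by case=> // /(fun h => hsub _ (or_intror h)).
case: (classic (classical_sets.subset I A0)) => hIA.
  move=> x; split; last exact: hsub.
  by move=> /hIA; left.
exfalso; apply: (hmax I) => //; split=> //.
by move=> x hx; apply: hsub; left.
Qed.

Lemma nonunit_max A x : subring A -> A x -> ~ A x^-1 ->
  exists M, maximal_ideal A M /\ M x.
Proof.
move=> hA hx hnx.
pose I0 z := exists c, A c /\ z = c * x.
have hI0 : ideal A I0.
  split.
  - by move=> _ [c [hc ->]]; apply: (srM hA).
  - by exists 0; split; [exact: (sr0 hA)|rewrite mul0r].
  - move=> _ _ [c [hc ->]] [d [hd ->]]; exists (c + d); split; [exact: (srD hA)|ring].
  - move=> a0 _ ha [c [hc ->]]; exists (a0 * c); split; [exact: (srM hA)|ring].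
have h1 : ~ I0 1.
  move=> [c [hc e]]; apply: hnx.
  have x0 : x != 0 by apply/eqP => x0; move: e; rewrite x0 mulr0 => /eqP; rewrite oner_eq0.
  suff -> : x^-1 = c by [].
  by rewrite -[x^-1]mul1r e mulfK.
have [M [hM hs]] := exists_max hA hI0 h1.
exists M; split=> //; apply: hs; exists 1; split; [exact: (sr1 hA)|by rewrite mul1r].
Qed.


Lemma local_unit A N : subring A -> maximal_ideal A N ->
  (forall Q, maximal_ideal A Q -> seteq Q N) -> forall z, A z -> ~ N z -> A z^-1.
Proof.
move=> hA hN hu z hz hNz; case: (classic (A z^-1)) => // hn.
have [M [hM hMz]] := nonunit_max hA hz hn.
by exfalso; apply: hNz; apply/(hu _ hM).
Qed.

Lemma gd_loc R T N : subring R -> subring T -> subset_ R T -> going_down R T ->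
  prime_ideal T N -> going_down R (localization T (fun y => T y /\ ~ N y)).
Proof.
move=> hR hT hRT hgd hN p q hp hq hpq Q hQ hQq.
set M := (fun y => T y /\ ~ N y).
have hM : mult_set T M := prime_compl hT hN.
have hTl := loc_sub hT hM.
have hTT : subset_ T (localization T M) by move=> x; apply: loc_in.
have hQ' := contr_prime hT hTl hTT hQ.
have hQ'q : seteq (fun x => (Q x /\ T x) /\ R x) q.
  move=> x; split; first by case=> [[hx _] hRx]; apply/hQq.
  by move/hQq=> [hx hRx]; split=> //; split=> //; apply: hRT.
have [P [hP hPQ hPp]] := hgd p q hp hq hpq _ hQ' hQ'q.
have hQN : forall z, T z -> Q z -> N z.
  move=> z hz hQz; case: (classic (N z)) => // hNz; exfalso.
  have z0 : z != 0 by apply/eqP=> e; apply: hNz; rewrite e; case: hN => [[_ h _ _] _ _].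
  have [[_ _ _ hmul] h1 _] := hQ.
  apply: h1; rewrite -(mulVf z0); apply: hmul; last exact: hQz.
  by apply: (loc_inv hT hM).
have hMP : forall s, M s -> ~ P s.
  move=> s [hs hNs] hPs; apply: hNs; apply: hQN => //.
  by have [] := hPQ _ hPs.
exists (ext M P); split.
- exact: ext_prime.
- move=> _ [a0 [s [ha hs ->]]].
  have [[_ _ _ hmul] _ _] := hQ.
  rewrite mulrC; apply: hmul; first exact: (loc_inv hT hM).
  by have [] := hPQ _ ha.
- move=> x; split.
    case=> hx hRx; apply/hPp; split=> //.
    exact: (ext_contr hT hM hP hMP (hRT _ hRx) hx).
  move=> hpx; have [hPx hRx] := (hPp x).2 hpx; split=> //.
  exact: (ext_in hM hPx).
Qed.

End Gen.

Section Main.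
Variables (K : fieldType) (S : K -> Prop) (n : nat) (m : 'I_n -> K -> Prop)
  (k : fieldType) (a : 'I_n -> k -> K).
Hypothesis hS : subring S.
Hypothesis hK : generalized_Krull S.
Hypothesis hn : (2 <= n)%N.
Hypothesis hm : forall i, maximal_ideal S (m i).
Hypothesis hdist : forall i j, seteq (m i) (m j) -> i = j.
Hypothesis hall : forall P, maximal_ideal S P -> exists i, seteq P (m i).
Hypothesis hht : forall j, height_ge2 S (m j).
Hypothesis hres : forall i, residue_iso S (m i) (a i).

Implicit Types (A B P Q T V : K -> Prop) (x y z t s : K).

Notation R := (pullback_ring S m a).
Definition J x := forall i, m i x.

Definition i0 : 'I_n := Ordinal (ltnW hn).
Definition i1 : 'I_n := Ordinal hn.

Lemma mI i : ideal S (m i). Proof. by case: (hm i). Qed.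
Lemma m1 i : ~ m i 1. Proof. by case: (hm i). Qed.
Lemma mP i : prime_ideal S (m i). Proof. exact: max_prime. Qed.
Lemma mS i x : m i x -> S x. Proof. exact: (idl_sub (mI i)). Qed.
Lemma mD i x y : m i x -> m i y -> m i (x + y). Proof. exact: (idlD (mI i)). Qed.
Lemma mB i x y : m i x -> m i y -> m i (x - y). Proof. exact: (idlB hS (mI i)). Qed.
Lemma mN i x : m i x -> m i (- x). Proof. exact: (idlN hS (mI i)). Qed.
Lemma mM i x y : S x -> m i y -> m i (x * y). Proof. exact: (idlM (mI i)). Qed.
Lemma mMr i x y : m i x -> S y -> m i (x * y). Proof. exact: (idlMr (mI i)). Qed.
Lemma m0 i : m i 0. Proof. exact: (idl0 (mI i)). Qed.
Lemma mprime i x y : S x -> S y -> m i (x * y) -> m i x \/ m i y.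
Proof. by case: (mP i) => _ _; apply. Qed.

Lemma aS i l : S (a i l). Proof. by case: (hres i). Qed.
Lemma aD i l u : m i (a i (l + u) - (a i l + a i u)). Proof. by case: (hres i) => _ [h _ _ _ _]; apply: h. Qed.
Lemma aM i l u : m i (a i (l * u) - a i l * a i u). Proof. by case: (hres i) => _ [_ h _ _ _]; apply: h. Qed.
Lemma a1 i : m i (a i 1 - 1). Proof. by case: (hres i) => _ []. Qed.
Lemma ainj i l : m i (a i l) -> l = 0. Proof. by case: (hres i) => _ [_ _ _ h _]; apply: h. Qed.
Lemma asurj i s : S s -> exists l, m i (s - a i l). Proof. by case: (hres i) => _ [_ _ _ _ h]; apply: h. Qed.

Lemma a0 i : m i (a i 0).
Proof.
have := aD i 0 0; rewrite addr0.
have -> : a i 0 - (a i 0 + a i 0) = - a i 0 by ring.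
by move/mN; rewrite opprK.
Qed.

Lemma aB i l u : m i (a i l - a i u - a i (l - u)).
Proof.
have := aD i (l - u) u; rewrite subrK => h.
have -> : a i l - a i u - a i (l - u) = a i l - (a i (l - u) + a i u) by ring.
exact: h.
Qed.

Lemma J_S x : J x -> S x. Proof. by move=> h; apply: (mS (h i0)). Qed.
Lemma J_R x : J x -> R x.
Proof.
move=> h; split; first exact: J_S.
by exists 0 => i; apply: mB; [apply: h|apply: a0].
Qed.
Lemma R_S x : R x -> S x. Proof. by case. Qed.

Lemma R_sub : subring R.
Proof.
split.
- split; first exact: (sr1 hS).
  by exists 1 => i; rewrite -opprB; apply: mN; apply: a1.
- move=> x y [hx [l hl]] [hy [u hu]]; split; first exact: (srB hS).
  exists (l - u) => i.
  have -> : x - y - a i (l - u) = (x - a i l) - (y - a i u) + (a i l - a i u - a i (l - u)) by ring.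
  by apply: mD; [apply: mB|apply: aB].
- move=> x y [hx [l hl]] [hy [u hu]]; split; first exact: (srM hS).
  exists (l * u) => i.
  have -> : x * y - a i (l * u) = (x - a i l) * y + a i l * (y - a i u) - (a i (l * u) - a i l * a i u) by ring.
  apply: mB; last exact: aM.
  by apply: mD; [apply: mMr|apply: mM; [apply: aS|]].
Qed.

Lemma J_ideal_S : ideal S J.
Proof.
split.
- exact: J_S.
- by move=> i; apply: m0.
- by move=> x y hx hy i; apply: mD.
- by move=> c x hc hx i; apply: mM.
Qed.

Lemma comax i j : i != j -> exists x, m i x /\ m j (1 - x).
Proof.
move=> hij.
pose I z := exists x y, [/\ m i x, m j y & z = x + y].
have hI : ideal S I.
  split.
  - by move=> _ [x [y [hx hy ->]]]; apply: (srD hS); apply: mS; eassumption.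
  - by exists 0, 0; split; [apply: m0|apply: m0|rewrite addr0].
  - move=> _ _ [x [y [hx hy ->]]] [x' [y' [hx' hy' ->]]].
    by exists (x + x'), (y + y'); split; [apply: mD|apply: mD|ring].
  - move=> c _ hc [x [y [hx hy ->]]].
    by exists (c * x), (c * y); split; [apply: mM|apply: mM|ring].
have hsub : subset_ (m j) I by move=> y hy; exists 0, y; split=> //; [apply: m0|rewrite add0r].
have [_ _ hmaxj] := hm j.
case: (hmaxj I hI hsub) => [[x [y [hx hy e]]]|heq].
  by exists x; split=> //; rewrite e; have -> : x + y - x = y by ring.
exfalso; move/negP: hij; apply; apply/eqP; apply: hdist.
have hsub' : subset_ (m i) (m j) by move=> x hx; apply/heq; exists x, 0; split=> //; [apply: m0|rewrite addr0].
have [_ _ hmaxi] := hm i.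
case: (hmaxi (m j) (mI j) hsub') => [/m1 //|h].
by move=> x; split=> /h.
Qed.

Lemma idem i : exists e, [/\ S e, m i (1 - e) & forall j, j != i -> m j e].
Proof.
have : forall j, exists x, j != i -> m j x /\ m i (1 - x).
  move=> j; case: (boolP (j != i)) => hj; last by exists 0.
  by have [x hx] := comax hj; exists x.
case/fin_all_exists => x hx.
exists (\prod_(j | j != i) x j); split.
- by apply: (sr_prod (A:=S)) => // => j hj; apply: (mS (hx j hj).1).
- suff [] : S (\prod_(j | j != i) x j) /\ m i (1 - \prod_(j | j != i) x j) by [].
  apply: (big_rec (fun w => S w /\ m i (1 - w))) => [|j w hj [hw hw']].
    by split; [apply: (sr1 hS)|rewrite subrr; apply: m0].
  have [hxj hxj'] := hx j hj; split; first by apply: (srM hS) => //; apply: (mS hxj).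
  have -> : 1 - x j * w = (1 - x j) + x j * (1 - w) by ring.
  by apply: mD => //; apply: mM => //; apply: (mS hxj).
- move=> j hj; rewrite (bigD1 j) //=; apply: mMr; first exact: (hx j hj).1.
  by apply: (sr_prod (A:=S)) => // => l /andP [hl _]; apply: (mS (hx l hl).1).
Qed.

Lemma m_sum i (I : Type) (r : seq I) (P : pred I) (F : I -> K) :
  (forall j, P j -> m i (F j)) -> m i (\sum_(j <- r | P j) F j).
Proof. move=> hF; elim/big_rec: _ => [|j w Pj IH]; [exact: m0|by apply: mD => //; apply: hF]. Qed.

Lemma lift l : exists c, R c /\ forall i, m i (c - a i l).
Proof.
have [e he] := fin_all_exists idem.
pose c := \sum_(j < n) e j * a j l.
have hc : forall i, m i (c - a i l).
  move=> i; rewrite /c (bigD1 i) //=.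
  have -> : e i * a i l + \sum_(j < n | j != i) e j * a j l - a i l =
     - ((1 - e i) * a i l) + \sum_(j < n | j != i) e j * a j l by ring.
  apply: mD; first by apply: mN; apply: mMr; [case: (he i)|apply: aS].
  apply: m_sum => j hj; apply: mMr; last exact: aS.
  by case: (he j) => _ _; apply; rewrite eq_sym.
have hSc : S c by apply: (sr_sum (A:=S)) => // => j _; apply: (srM hS); [case: (he j)|apply: aS].
by exists c; split=> //; split=> //; exists l.
Qed.

Lemma unitS s : S s -> (forall i, ~ m i s) -> S s^-1 /\ s != 0.
Proof.
move=> hs hns.
have s0 : s != 0 by apply/eqP => e; apply: (hns i0); rewrite e; apply: m0.
split=> //; case: (classic (S s^-1)) => // hn'.
have [M [hM hMs]] := nonunit_max hS hs hn'.
have [i hi] := hall hM; exfalso; apply: (hns i); exact/hi.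
Qed.

Lemma R_unit r : R r -> ~ J r -> R r^-1 /\ r != 0.
Proof.
move=> [hr [l hl]] hJ.
have [i hi] : exists i, ~ m i r by apply: not_all_ex_not.
have l0 : l != 0.
  apply/eqP => e; apply: hi; rewrite -(subrK (a i l) r); apply: mD => //; rewrite e; exact: a0.
have hns : forall j, ~ m j r.
  move=> j hj; move/eqP: l0; apply; apply: (ainj (i := j)).
  have -> : a j l = r - (r - a j l) by ring.
  by apply: mB.
have [hr' r0] := unitS hr hns; split=> //; split=> //.
exists l^-1 => j.
have -> : r^-1 - a j l^-1 = r^-1 * (- ((r - a j l) * a j l^-1) - (a j l * a j l^-1 - a j (l * l^-1)) - (a j (l * l^-1) - 1)).
  by field.
apply: mM => //; apply: mB; last by rewrite mulfV //; apply: a1.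
apply: mB; first by apply: mN; apply: mMr => //; apply: aS.
by rewrite -opprB; apply: mN; apply: aM.
Qed.

Lemma J_max : maximal_ideal R J.
Proof.
split.
- split.
  + by move=> x hx; apply: J_R.
  + by move=> i; apply: m0.
  + by move=> x y hx hy i; apply: mD.
  + by move=> c x hc hx i; apply: mM => //; apply: R_S.
- by move=> h; apply: (@m1 i0); apply: h.
- move=> I hI hJI.
  case: (classic (exists r, I r /\ ~ J r)) => [[r [hr hnr]]|hno].
    left; have hRr := idl_sub hI hr; have [hr' r0] := R_unit hRr hnr.
    by rewrite -(mulfV r0); apply: (idlMr hI).
  right => x; split; last exact: hJI.
  by move=> hx; apply: NNPP => hnx; apply: hno; exists x.
Qed.

Lemma prime_sub_J q : ideal R q -> ~ q 1 -> subset_ q J.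
Proof.
move=> hq hq1 x hx; apply: NNPP => hnx.
have [hx' x0] := R_unit (idl_sub hq hx) hnx.
by apply: hq1; rewrite -(mulfV x0); apply: (idlMr hq).
Qed.

Lemma local_R : local_ring R.
Proof.
exists J; split; first exact: J_max.
move=> Q [hQ hQ1 hQmax] x.
have hsub := prime_sub_J hQ hQ1.
have [hJ hJ1 _] := J_max.
case: (hQmax J hJ hsub) => [//|h].
by split=> [/hsub|/h].
Qed.

Lemma jnz : exists j, J j /\ j != 0.
Proof.
have : forall i, exists x, m i x /\ x != 0.
  move=> i; have [Q0 [Q1 [_ hQ1 _ [_ [x [hx hnx]]]]]] := hht i.
  exists x; split=> //; apply/eqP => e; apply: hnx; rewrite e.
  by case: hQ1 => [[_ h _ _] _ _].
case/fin_all_exists => x hx.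
exists (\prod_i x i); split.
  by move=> i; rewrite (bigD1 i) //=; apply: mMr; [case: (hx i)|apply: (sr_prod (A:=S)) => // j _; apply: (mS (hx j).1)].
by apply/prodf_neq0 => i _; case: (hx i).
Qed.

Lemma fracR_S x : Defs.frac R x -> Defs.frac S x.
Proof. by apply: frac_mono => y; apply: R_S. Qed.

Lemma S_fracR s : S s -> Defs.frac R s.
Proof.
move=> hs; have [j [hj j0]] := jnz.
exists (s * j), j; split=> //.
- by apply: J_R => i; apply: mM.
- exact: J_R.
- by rewrite mulfK.
Qed.

Lemma S_integral s : S s -> integral_over R s.
Proof.
move=> hs.
have : forall i, exists c, R c /\ m i (s - c).
  move=> i; have [l hl] := asurj i hs; have [c [hc hc']] := lift l.
  exists c; split=> //.
  have -> : s - c = (s - a i l) - (c - a i l) by ring.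
  by apply: mB.
case/fin_all_exists => c hc.
pose p := \prod_(i < n) ('X - (c i)%:P).
have hpc : forall j, R p`_j.
  rewrite /p; apply: (big_rec (fun w : {poly K} => forall j, R w`_j)) => [j|i w _ IH j].
    rewrite coefC; case: (j == 0); [exact: (sr1 R_sub)|exact: (sr0 R_sub)].
  rewrite mulrBl coefB coefXM coefCM; apply: (srB R_sub).
    case: (j == 0); [exact: (sr0 R_sub)|exact: IH].
  by apply: (srM R_sub); [case: (hc i)|apply: IH].
have hps : J p.[s].
  rewrite /p horner_prod => i; rewrite (bigD1 i) //= hornerXsubC; apply: mMr; first by case: (hc i).
  apply: (sr_prod (A:=S)) => // j _; rewrite hornerXsubC; apply: (srB hS) => //; apply: R_S; by case: (hc j).
exists (p - (p.[s])%:P); split.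
- have hsz : (1 < size p)%N.
    rewrite /p size_prod_XsubC ltnS lt0n size_eq0; apply/eqP => E.
    by have := mem_index_enum i0; rewrite E.
  rewrite monicE lead_coefDl.
    by rewrite -monicE; apply: monic_prod_XsubC.
  by rewrite size_polyN; apply: (leq_ltn_trans (size_polyC_leq1 _)).
- move=> j; rewrite coefB coefC; apply: (srB R_sub) => //.
  by case: (j == 0); [apply: J_R|exact: (sr0 R_sub)].
- by rewrite rootE hornerD hornerN hornerC subrr.
Qed.

Lemma intclosed_sub (V : K -> Prop) (x : K) : subring V -> x != 0 -> (V x \/ V x^-1) ->
  integral_over V x -> V x.
Proof.
move=> hV x0 [//|hxi] [p [hmo hpc hroot]].
set d := (size p).-1.
have hsz : size p = d.+1.
  by rewrite /d prednK // lt0n size_poly_eq0 monic_neq0.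
have hd : p`_d = 1 by move/monicP: hmo; rewrite /lead_coef hsz.
have e0 : \sum_(i < d.+1) p`_i * x ^+ i = 0 by move/rootP: hroot; rewrite horner_coef hsz.
case: d hsz hd e0 => [|d] hsz hd e0.
  by move: e0; rewrite big_ord1 hd expr0 mulr1 => /eqP; rewrite oner_eq0.
pose y := x^-1.
pose Z := \sum_(i < d.+1) p`_i * y ^+ (d - i).
have hZ : V Z by apply: (sr_sum (A:=V)) => // i _; apply: (srM hV); [apply: hpc|exact: (srX _ hV hxi)].
suff -> : x = - Z by apply: (srN hV).
have e1 : 1 + y * Z = 0.
  have := congr1 (fun w => w * y ^+ d.+1) e0.
  rewrite /= mul0r big_distrl big_ord_recr /= hd mul1r -exprMn mulfV // expr1n.
  move=> <-; rewrite addrC /Z mulr_sumr; congr (_ + _); apply: eq_bigr => i _.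
  have hi : (i <= d)%N by rewrite -ltnS.
  have -> : y ^+ d.+1 = y * y ^+ (d - i) * y ^+ i by rewrite -exprS -exprD addSn subnK.
  have hxy : x ^+ i * y ^+ i = 1 by rewrite -exprMn mulfV // expr1n.
  move: hxy; set X := x ^+ i; set Y := y ^+ i; set W := y ^+ (d - i) => hxy.
  by rewrite -[LHS]mulr1 -hxy; ring.
have : x * (1 + y * Z) = 0 by rewrite e1 mulr0.
rewrite mulrDr mulr1 mulrA /y mulfV // mul1r => /eqP; rewrite addr_eq0 => /eqP.
done.
Qed.

Lemma hK1 x : S x <-> Defs.frac S x /\ forall P, height_one S P -> loc_at_prime S P x.
Proof. by case: hK => h _ _; apply: h. Qed.
Lemma hK3 P : height_one S P -> valuation_domain (loc_at_prime S P).
Proof. by case: hK => _ _ h; apply: h. Qed.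

Lemma ht1_prime P : height_one S P -> prime_ideal S P. Proof. by case. Qed.

Lemma locP_sub P : prime_ideal S P -> subring (loc_at_prime S P).
Proof. by move=> hP; apply: loc_sub => //; apply: prime_compl. Qed.
Lemma locP_in P x : prime_ideal S P -> S x -> loc_at_prime S P x.
Proof. by move=> hP hx; apply: loc_in => //; apply: prime_compl. Qed.

Lemma S_intclosed x : Defs.frac S x -> integral_over S x -> S x.
Proof.
move=> hx hint; case: (eqVneq x 0) => [->|x0]; first exact: (sr0 hS).
apply/hK1; split=> // P hP.
have hPp := ht1_prime hP.
apply: intclosed_sub => //; first exact: locP_sub.
  apply: (hK3 hP) => //; apply: (frac_mono _ hx) => y; exact: locP_in.
case: hint => p [h1 h2 h3]; exists p; split=> // i; exact: locP_in.
Qed.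

Lemma intcl_eq : seteq (integral_closure R) S.
Proof.
move=> x; split.
  case=> hx [p [h1 h2 h3]]; apply: S_intclosed; first exact: fracR_S.
  by exists p; split=> // i; apply: R_S.
by move=> hx; split; [apply: S_fracR|apply: S_integral].
Qed.

Lemma i10 : i1 != i0. Proof. by apply/eqP => /(congr1 val). Qed.

Lemma not_intcl : ~ integrally_closed R.
Proof.
move=> hic; have [e [he he1 he2]] := idem i0.
have hRe : R e by apply: hic; [exact: S_fracR|exact: S_integral].
case: hRe => _ [l hl].
have hme : m i1 e := he2 _ i10.
have l0 : l = 0.
  apply: (@ainj i1); have -> : a i1 l = e - (e - a i1 l) by ring.
  exact: mB.
apply: (@m1 i0); have -> : 1 = (1 - e) + ((e - a i0 l) + a i0 l) by ring.
apply: mD => //; apply: mD => //; rewrite l0; exact: a0.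
Qed.

Lemma prime_pow A P z (e : nat) : subring A -> prime_ideal A P -> A z -> P (z ^+ e) -> P z.
Proof.
move=> hA [hI h1 hp] hz; elim: e => [|e IH]; first by rewrite expr0.
by rewrite exprS => /(hp _ _ hz (srX _ hA hz)) [].
Qed.

Lemma ht1_J P : height_one S P -> exists t, J t /\ ~ P t.
Proof.
move=> hP; have [hPp [x0 [hx0 hx0']] hmin] := hP.
have : forall i, exists x, m i x /\ ~ P x.
  move=> i; apply: NNPP => hno.
  have hsub : subset_ (m i) P.
    by move=> x hx; apply: NNPP => hnx; apply: hno; exists x.
  have [_ _ hmaxi] := hm i.
  have [hPI hP1 _] := hPp.
  case: (hmaxi P hPI hsub) => // heq.
  have [Q0 [Q1 [hQ0 hQ1 [_ [y [hy hy']]] [hQ1s [z [hz hz']]]]]] := hht i.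
  have hQ1P : subset_ Q1 P by move=> w /hQ1s /hsub.
  case: (hmin Q1 hQ1 hQ1P) => [h0|h].
    apply: hy'; have -> : y = 0 by apply: h0.
    by case: hQ0 => [[_ h _ _] _ _].
  by apply: hz'; apply/h/heq.
case/fin_all_exists => x hx.
exists (\prod_i x i); split.
  move=> i; rewrite (bigD1 i) //=; apply: mMr; first by case: (hx i).
  by apply: (sr_prod (A:=S)) => // j _; apply: (mS (hx j).1).
apply: (proj2 (prime_prod _ hS (ht1_prime hP) _)).
by move=> i _; case: (hx i) => h1 h2; split=> //; apply: mS h1.
Qed.

Lemma loc_ext P (P' : K -> Prop) x : seteq P P' -> loc_at_prime S P x -> loc_at_prime S P' x.
Proof.
move=> e [a0 [s [ha [hs hs'] ->]]]; exists a0, s; split=> //; split=> // /e; exact: hs'.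
Qed.

Lemma gd_val T Q (P'' : K -> Prop) t x : subring T -> subset_ R T -> subset_ T (Defs.frac S) ->
  height_one S Q -> ideal T P'' -> (forall r, R r -> (P'' r <-> Q r)) ->
  J t -> ~ Q t -> T x -> loc_at_prime S Q x.
Proof.
move=> hT hRT hTf hQ hP'' hPQ ht hQt hx.
have hQp := ht1_prime hQ.
case: (eqVneq x 0) => [->|x0]; first by apply: locP_in => //; exact: (sr0 hS).
have hfx : Defs.frac (loc_at_prime S Q) x.
  by apply: (frac_mono _ (hTf _ hx)) => y; apply: locP_in.
case: (hK3 hQ hfx x0) => // [[a0 [s [ha [hs hs'] e]]]].
have s0 : s != 0 by apply/eqP => s0; apply: hs'; rewrite s0; case: hQp => [[_ h _ _] _ _].
have hxa : x * a0 = s.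
  have : a0 = s * x^-1 by rewrite e mulrC divfK.
  by move=> ->; rewrite mulrCA mulfV // mulr1.
case: (classic (Q a0)) => hQa.
  exfalso.
  have hat : J (a0 * t) by move=> i; exact: (mM ha (ht i)).
  have hat' : P'' (a0 * t).
    apply/(hPQ _ (J_R hat)); case: hQp => [hI _ _]; exact: (idlMr hI hQa (J_S ht)).
  have hst : J (s * t) by move=> i; exact: (mM hs (ht i)).
  have : P'' (s * t) by rewrite -hxa -mulrA; apply: (idlM hP'').
  move/(hPQ _ (J_R hst)); case: hQp => _ _ hp.
  by case/(hp _ _ hs (J_S ht)).
exists s, a0; split=> //.
have a00 : a0 != 0 by apply/eqP => a00; move: hxa; rewrite a00 mulr0 => /eqP; rewrite eq_sym (negPf s0).
by rewrite -hxa mulfK.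
Qed.

Lemma srMn A x (q : nat) : subring A -> A x -> A (x *+ q).
Proof.
move=> hA hx; elim: q => [|q IH]; first by rewrite mulr0n; exact: (sr0 hA).
by rewrite mulrS; apply: (srD hA).
Qed.

Lemma arch Q u x : height_one S Q -> Q u -> Defs.frac S x ->
  exists e : nat, loc_at_prime S Q (u ^+ e * x).
Proof.
move=> hQ hu hx.
have hQp := ht1_prime hQ.
have hV := locP_sub hQp.
have hSV : forall y, S y -> loc_at_prime S Q y by move=> y; apply: locP_in.
have hQS : forall y, Q y -> S y by case: hQp => [hI _ _] y; apply: (idl_sub hI).
have hQ0 : Q 0 by case: hQp => [hI _ _]; apply: (idl0 hI).
case: (eqVneq x 0) => [->|x0].
  by exists 0%N; rewrite mulr0; apply: hSV; exact: (sr0 hS).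
have hfx : Defs.frac (loc_at_prime S Q) x by apply: (frac_mono _ hx).
case: (hK3 hQ hfx x0) => [hVx|]; first by exists 0%N; rewrite expr0 mul1r.
move=> [c [d [hc [hd hd'] e]]].
have d0 : d != 0 by apply/eqP => d0; apply: hd'; rewrite d0.
have c0 : c != 0.
  apply/eqP => c0; move: e; rewrite c0 mul0r => /eqP; rewrite invr_eq0; exact/negP.
have hxe : x = d / c by rewrite -[x]invrK e invf_div.
case: (classic (Q c)) => hQc; last first.
  by exists 0%N; rewrite expr0 mul1r hxe; exists d, c; split.
pose rad z := S z /\ exists e : nat, loc_at_prime S Q (z ^+ e / c).
have rad0 : rad 0 by split; [exact: (sr0 hS)|exists 1%N; rewrite expr1 mul0r; apply: hSV; exact: (sr0 hS)].
have hrad : prime_ideal S rad.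
  split.
  - split.
    + by move=> z [].
    + exact: rad0.
    + move=> z1 z2 [hz1 [e1 he1]] [hz2 [e2 he2]]; split; first exact: (srD hS).
      exists (e1 + e2)%N; rewrite exprDn mulr_suml.
      apply: (sr_sum (A:=loc_at_prime S Q)) => // i _; rewrite mulrnAl; apply: (@srMn (loc_at_prime S Q) _ _ hV).
      set N := (e1 + e2)%N.
      case: (leqP e2 i) => hi.
        rewrite -(subnK hi) exprD.
        have -> : z1 ^+ (N - (i - e2 + e2)) * (z2 ^+ (i - e2) * z2 ^+ e2) / c =
          (z1 ^+ (N - (i - e2 + e2)) * z2 ^+ (i - e2)) * (z2 ^+ e2 / c) by rewrite !mulrA.
        by apply: (srM hV) => //; apply: hSV; apply: (srM hS); apply: (srX _ hS).
      have hi' : (e1 <= N - i)%N.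
        by rewrite /N; move: hi; set ii := nat_of_ord i; lia.
      rewrite -(subnK hi') exprD.
      have -> : z1 ^+ (N - i - e1) * z1 ^+ e1 * z2 ^+ i / c =
          (z1 ^+ (N - i - e1) * z2 ^+ i) * (z1 ^+ e1 / c).
        by rewrite -!mulrA; congr (_ * _); rewrite mulrCA.
      by apply: (srM hV) => //; apply: hSV; apply: (srM hS); apply: (srX _ hS).
    + move=> a1' z ha [hz [e1 he1]]; split; first exact: (srM hS).
      exists e1; rewrite exprMn -mulrA; apply: (srM hV) => //; apply: hSV; exact: (srX _ hS).
  - move=> [_ [e1 [a' [s' [ha' [hs' hs''] e']]]]].
    rewrite expr1n in e'.
    have s0 : s' != 0 by apply/eqP => s0; apply: hs''; rewrite s0.
    apply: hs''.
    have := cross c0 s0 e'; rewrite mul1r => ->.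
    by case: hQp => [hI _ _]; exact: (idlM hI ha' hQc).
  - move=> z1 z2 hz1 hz2 [_ [e1 he1]].
    case: (eqVneq z1 0) => [->|z10]; first by left.
    case: (eqVneq z2 0) => [->|z20]; first by right.
    have w0 : z2 ^+ e1 != 0 by apply: expf_neq0.
    have w1 : z1 ^+ e1 != 0 by apply: expf_neq0.
    have hf : Defs.frac (loc_at_prime S Q) (z1 ^+ e1 / z2 ^+ e1).
      by exists (z1 ^+ e1), (z2 ^+ e1); split=> //; apply: hSV; apply: (srX _ hS).
    have hnz : z1 ^+ e1 / z2 ^+ e1 != 0 by rewrite mulf_neq0 // invr_eq0.
    move: he1; rewrite exprMn => he1.
    case: (hK3 hQ hf hnz) => hv; [left|right]; split=> //; exists (e1 + e1)%N.
      have -> : z1 ^+ (e1 + e1) / c = (z1 ^+ e1 / z2 ^+ e1) * (z1 ^+ e1 * z2 ^+ e1 / c).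
        by rewrite exprD; field; rewrite c0 w0.
      exact: (srM hV).
    rewrite invf_div in hv.
    have -> : z2 ^+ (e1 + e1) / c = (z2 ^+ e1 / z1 ^+ e1) * (z1 ^+ e1 * z2 ^+ e1 / c).
      by rewrite exprD; field; rewrite c0 w1.
    exact: (srM hV).
have hradQ : subset_ rad Q.
  move=> z [hz [e1 [a' [s' [ha' [hs' hs''] e']]]]].
  have s0 : s' != 0 by apply/eqP => s0; apply: hs''; rewrite s0.
  have := cross c0 s0 e' => e2.
  apply: (prime_pow (e := e1) hS hQp hz).
  have : Q (z ^+ e1 * s') by rewrite e2; case: hQp => [hI _ _]; exact: (idlM hI ha' hQc).
  by case: hQp => _ _ hp; case/(hp _ _ (srX _ hS hz) hs').
have hcr : rad c by split=> //; exists 1%N; rewrite expr1 mulfV //; apply: hSV; exact: (sr1 hS).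
have [_ _ hmin] := hQ.
case: (hmin rad hrad hradQ) => [h0|heq].
  by exfalso; move/eqP: c0; apply; exact: (h0 _ hcr).
have [_ [e1 he1]] := (heq u).2 hu.
exists e1; rewrite hxe.
have -> : u ^+ e1 * (d / c) = (u ^+ e1 / c) * d by ring.
by apply: (srM hV) => //; apply: hSV.
Qed.

Lemma loc_formula P x : prime_ideal S P -> Defs.frac S x ->
  (forall Q, height_one S Q -> subset_ Q P -> loc_at_prime S Q x) ->
  loc_at_prime S P x.
Proof.
move=> hP hx hloc.
have [a0 [b [ha hb b0 ex]]] := hx.
have [N [f hf]] : exists (N : nat) (f : nat -> K -> Prop), forall Q, height_one S Q -> Q b ->
    exists i, (i < N)%N /\ seteq Q (f i).
  by case: hK => _ h _; apply: h.
pose C (i : 'I_N) := exists Q, [/\ height_one S Q, seteq Q (f i) & ~ subset_ Q P].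
have : forall i : 'I_N, exists u, [/\ S u, ~ P u &
    forall Q, height_one S Q -> seteq Q (f i) -> ~ subset_ Q P -> Q u].
  move=> i; case: (classic (C i)) => [[Q [hQ hQf hQP]]|hnC].
    have [u [hu hu']] : exists u, Q u /\ ~ P u.
      apply: NNPP => hno; apply: hQP => y hy; apply: NNPP => hny; apply: hno; by exists y.
    exists u; split=> //.
      by case: (ht1_prime hQ) => [hI _ _]; apply: (idl_sub hI).
    by move=> Q' hQ' hQ'f _; apply/hQ'f; apply/hQf.
  exists 1; split; first exact: (sr1 hS).
    by case: hP.
  by move=> Q hQ hQf hQP; exfalso; apply: hnC; exists Q.
case/fin_all_exists => u hu.
pose U := \prod_(i < N) u i.
have hUS : S U by apply: (sr_prod (A:=S)) => // i _; case: (hu i).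
have hUP : ~ P U by apply: (proj2 (prime_prod _ hS hP _)) => i _; case: (hu i).
have hUQ : forall (i : 'I_N) Q, height_one S Q -> seteq Q (f i) -> ~ subset_ Q P -> Q U.
  move=> i Q hQ hQf hQP; rewrite /U (bigD1 i) //=.
  case: (ht1_prime hQ) => [hI _ _]; apply: (idlMr hI); first by case: (hu i) => _ _; apply.
  by apply: (sr_prod (A:=S)) => // j _; case: (hu j).
have : forall i : 'I_N, exists e : nat, forall Q, height_one S Q -> seteq Q (f i) ->
    ~ subset_ Q P -> loc_at_prime S Q (U ^+ e * x).
  move=> i; case: (classic (C i)) => [[Q [hQ hQf hQP]]|hnC]; last first.
    by exists 0%N => Q hQ hQf hQP; exfalso; apply: hnC; exists Q.
  have [e he] := arch hQ (hUQ i Q hQ hQf hQP) hx.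
  exists e => Q' hQ' hQ'f _; apply: (loc_ext _ he) => y; split => hy.
    by apply/hQ'f; apply/hQf.
  by apply/hQf; apply/hQ'f.
case/fin_all_exists => e he.
pose E := (\sum_(i < N) e i)%N.
have hy : S (U ^+ E * x).
  apply/hK1; split.
    rewrite ex; exists (U ^+ E * a0), b; split=> //; last by rewrite mulrA.
    by apply: (srM hS) => //; apply: (srX _ hS).
  move=> Q hQ.
  have hQp := ht1_prime hQ.
  have hUE : loc_at_prime S Q (U ^+ E) := locP_in hQp (srX _ hS hUS).
  case: (classic (Q b)) => hQb; last first.
    apply: (srM (locP_sub hQp)) => //; rewrite ex; exists a0, b; split=> //.
  case: (classic (subset_ Q P)) => hQP.
    by apply: (srM (locP_sub hQp)) => //; apply: hloc.
  have [i [hi hQf]] := hf Q hQ hQb.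
  pose io := Ordinal hi.
  have h := he io Q hQ hQf hQP.
  have -> : U ^+ E * x = U ^+ (\sum_(j < N | j != io) e j) * (U ^+ e io * x).
    by rewrite /E (bigD1 io) //= exprD -mulrA mulrCA.
  apply: (srM (locP_sub hQp)) => //; apply: locP_in => //; exact: (srX _ hS hUS).
have U0 : U ^+ E != 0.
  apply: expf_neq0; apply/eqP => U0; apply: hUP; rewrite U0; by case: hP => [[_ h _ _] _ _].
exists (U ^+ E * x), (U ^+ E); split=> //.
  split; first exact: (srX _ hS).
  by move/(prime_pow hS hP hUS).
by rewrite mulrC mulKf.
Qed.

Lemma loc_trivial T : subset_ R T -> subset_ T R -> is_localization R T.
Proof.
move=> hRT hTR; exists (fun y => y = 1); split.
  split.
  - by move=> y ->; exact: (sr1 R_sub).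
  - by [].
  - by move/eqP; rewrite eq_sym oner_eq0.
  - by move=> x y -> ->; rewrite mulr1.
move=> x; split.
  by move=> hx; exists x, 1; split=> //; [exact: hTR|rewrite divr1].
by move=> [a0 [s [ha -> ->]]]; rewrite divr1; apply: hRT.
Qed.

Lemma coreB T N : subring T -> subset_ R T -> subset_ T (Defs.frac R) -> going_down R T ->
  prime_ideal T N -> (forall z, T z -> ~ N z -> T z^-1) -> subset_ J N -> subset_ T R.
Proof.
move=> hT hRT hTf hgd hN hU hJN.
have hTfS : subset_ T (Defs.frac S) by move=> x /hTf; apply: fracR_S.
have hq := contr_prime R_sub hT hRT hN.
have hTS : subset_ T S.
  move=> x hx; apply/hK1; split; first exact: hTfS.
  move=> Q hQ.
  have [t [ht hQt]] := ht1_J hQ.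
  have hp := contr_prime R_sub hS R_S (ht1_prime hQ).
  have hpq : subset_ (fun x => Q x /\ R x) (fun x => N x /\ R x).
    move=> y [hy hRy]; split=> //; apply: hJN.
    by case: hp => [hI h1 _]; apply: (prime_sub_J hI h1).
  have [P'' [hP'' _ hP''p]] := hgd _ _ hp hq hpq N hN (fun y => conj id id).
  apply: (gd_val hT hRT hTfS hQ (P'' := P'') _ _ ht hQt hx).
    by case: hP''.
  move=> r hr; split=> h.
    by have [] := (hP''p r).1 (conj h hr).
  by have [] := (hP''p r).2 (conj h hr).
have hNm : forall z i, T z -> m i z -> N z.
  move=> z i hz hmz; apply: NNPP => hNz.
  have hz' := hU z hz hNz.
  have z0 : z != 0 by apply/eqP => z0; apply: hNz; rewrite z0; case: hN => [[_ h _ _] _ _].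
  by apply: (@m1 i); rewrite -(mulfV z0); apply: mMr => //; apply: hTS.
move=> x hx.
have [mu hmu] := asurj i0 (hTS _ hx).
have [c [hc hc']] := lift mu.
have hu : T (x - c) by apply: (srB hT) => //; apply: hRT.
case: (classic (J (x - c))) => hJu.
  by rewrite -(subrK c x); apply: (srD R_sub) => //; apply: J_R.
have [j hj] : exists j, ~ m j (x - c) by apply: not_all_ex_not.
have hmu0 : m i0 (x - c).
  have -> : x - c = (x - a i0 mu) - (c - a i0 mu) by ring.
  by apply: mB.
have [nu hnu] := asurj j (hTS _ hu).
have [c' [hc1 hc1']] := lift nu.
have hN1 : N (x - c) by apply: (hNm _ i0).
have hN2 : N (x - c - c').
  apply: (hNm _ j); first by apply: (srB hT) => //; apply: hRT.
  have -> : x - c - c' = (x - c - a j nu) - (c' - a j nu) by ring.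
  by apply: mB.
have hNc : N c'.
  have -> : c' = (x - c) - (x - c - c') by ring.
  by case: hN => [hI _ _]; apply: (idlB hT hI).
have hJc : J c'.
  by case: hq => [hI h1 _]; apply: (prime_sub_J hI h1); split.
have nu0 : nu = 0.
  apply: (@ainj j); have -> : a j nu = c' - (c' - a j nu) by ring.
  by apply: mB.
exfalso; apply: hj; have -> : x - c = (x - c - a j nu) + a j nu by ring.
by apply: mD => //; rewrite nu0; apply: a0.
Qed.

Lemma coreA T N t : subring T -> subset_ R T -> subset_ T (Defs.frac R) -> going_down R T ->
  prime_ideal T N -> (forall z, T z -> ~ N z -> T z^-1) -> J t -> ~ N t ->
  seteq T (localization R (fun y => R y /\ ~ N y)).
Proof.
move=> hT hRT hTf hgd hN hU ht hNt.
have hTfS : subset_ T (Defs.frac S) by move=> x /hTf; apply: fracR_S.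
have hq := contr_prime R_sub hT hRT hN.
have hTt : T t by apply: hRT; apply: J_R.
have ht' := hU t hTt hNt.
have t0 : t != 0 by apply/eqP => t0; apply: hNt; rewrite t0; case: hN => [[_ h _ _] _ _].
have hST : subset_ S T.
  move=> s hs; have -> : s = (s * t) * t^-1 by rewrite mulfK.
  apply: (srM hT) => //; apply: hRT; apply: J_R => i; exact: (mM hs (ht i)).
have hP := contr_prime hS hT hST hN.
have [hNI hN1 hNp] := hN.
have hM : mult_set R (fun y => R y /\ ~ N y).
  split.
  - by move=> y [].
  - by split; [exact: (sr1 R_sub)|].
  - by case=> _; apply; apply: (idl0 hNI).
  - move=> x y [hx hx'] [hy hy']; split; first exact: (srM R_sub).
    by case/(hNp _ _ (hRT _ hx) (hRT _ hy)).
move=> x; split=> hx.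
  have hloc : loc_at_prime S (fun x => N x /\ S x) x.
    apply: loc_formula => //; first exact: hTfS.
    move=> Q hQ hQP.
    have hQt : ~ Q t by move/hQP => [].
    have hp := contr_prime R_sub hS R_S (ht1_prime hQ).
    have hpq : subset_ (fun x => Q x /\ R x) (fun x => N x /\ R x).
      by move=> y [hy hRy]; split=> //; case: (hQP _ hy).
    have [P'' [hP'' _ hP''p]] := hgd _ _ hp hq hpq N hN (fun y => conj id id).
    apply: (gd_val hT hRT hTfS hQ (P'' := P'') _ _ ht hQt hx).
      by case: hP''.
    move=> r hr; split=> h.
      by have [] := (hP''p r).1 (conj h hr).
    by have [] := (hP''p r).2 (conj h hr).
  case: hloc => [a0 [s [ha [hs hs'] ->]]].
  have s0 : s != 0 by apply/eqP => s0; apply: hs'; rewrite s0; split; [apply: (idl0 hNI)|exact: (sr0 hS)].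
  exists (a0 * t), (s * t); split.
  - by apply: J_R => i; exact: (mM ha (ht i)).
  - split; first by apply: J_R => i; exact: (mM hs (ht i)).
    case/(hNp _ _ (hST _ hs) hTt) => // hNs.
    by apply: hs'.
  - by field; rewrite s0 t0.
case: hx => [a0 [s [ha [hs hs'] ->]]].
by apply: (srM hT); [apply: hRT|apply: hU => //; apply: hRT].
Qed.

Lemma perinormal_R : perinormal R.
Proof.
move=> T [hT hRT hTf] [N [hNmax hNu]] hgd.
have hN := max_prime hT hNmax.
have hU := local_unit hT hNmax hNu.
case: (classic (subset_ J N)) => hJN.
  by apply: loc_trivial => //; apply: (coreB hT hRT hTf hgd hN hU hJN).
have [t [ht hNt]] : exists t, J t /\ ~ N t.
  by apply: NNPP => hno; apply: hJN => x hx; apply: NNPP => hnx; apply: hno; exists x.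
exists (fun y => R y /\ ~ N y); split; last exact: (coreA hT hRT hTf hgd hN hU ht hNt).
have [hNI hN1 hNp] := hN.
split.
- by move=> y [].
- by split; [exact: (sr1 R_sub)|].
- by case=> _; apply; apply: (idl0 hNI).
- move=> x y [hx hx'] [hy hy']; split; first exact: (srM R_sub).
  by case/(hNp _ _ (hRT _ hx) (hRT _ hy)).
Qed.

Lemma gd_S T : subring T -> subset_ S T -> going_down R T ->
  (forall Q, prime_ideal T Q -> exists t, J t /\ ~ Q t) -> going_down S T.
Proof.
move=> hT hST hgd hJ p q hp hq hpq Q hQ hQq.
have hRS := R_S.
have hpR := contr_prime R_sub hS hRS hp.
have hqR := contr_prime R_sub hS hRS hq.
have hpqR : subset_ (fun x => p x /\ R x) (fun x => q x /\ R x).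
  by move=> x [hx hx']; split=> //; apply: hpq.
have hQqR : seteq (fun x => Q x /\ R x) (fun x => q x /\ R x).
  move=> x; split.
    by case=> hx hRx; split=> //; apply/hQq; split=> //; apply: R_S.
  by case=> /hQq [hx _] hRx.
have [P'' [hP'' hP''Q hP''p]] := hgd _ _ hpR hqR hpqR Q hQ hQqR.
have [t [ht hQt]] := hJ Q hQ.
have hTt : T t by apply: hST; apply: J_S.
have hpt : ~ p t by move/hpq/hQq => [].
exists P''; split=> // x; split.
  case=> hx hSx.
  have hxt : J (x * t) by move=> i; exact: (mM hSx (ht i)).
  have : P'' (x * t) by case: hP'' => [hI _ _]; apply: (idlMr hI).
  move=> h; have [h1 _] := (hP''p (x * t)).1 (conj h (J_R hxt)).
  by case: hp => _ _ hpp; case: (hpp _ _ hSx (J_S ht) h1) => // /hpt.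
move=> hx.
have hSx : S x by case: hp => [hI _ _]; apply: (idl_sub hI).
have hxt : J (x * t) by move=> i; exact: (mM hSx (ht i)).
have h1 : p (x * t) by case: hp => [hI _ _]; apply: (idlMr hI) => //; apply: J_S.
have [h2 _] := (hP''p (x * t)).2 (conj h1 (J_R hxt)).
split=> //; case: hP'' => _ _ hpp; case: (hpp _ _ (hST _ hSx) hTt h2) => // /hP''Q.
by move/hQt.
Qed.

Lemma glob_R : globally_perinormal S -> globally_perinormal R.
Proof.
move=> hgS T [hT hRT hTf] hgd.
have hTfS : subset_ T (Defs.frac S) by move=> x /hTf; apply: fracR_S.
have G1 : (exists t, [/\ J t, t != 0 & T t^-1]) -> is_localization R T.
  case=> t [ht t0 ht'].
  have hST : subset_ S T.
    move=> s hs; have -> : s = (s * t) * t^-1 by rewrite mulfK.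
    apply: (srM hT) => //; apply: hRT; apply: J_R => i; exact: (mM hs (ht i)).
  have hgdS : going_down S T.
    apply: gd_S => // Q hQ; exists t; split=> // hQt.
    case: hQ => [[_ _ _ hmul] h1 _]; apply: h1; rewrite -(mulVf t0).
    exact: hmul.
  have [M [hM heq]] := hgS T (And3 hT hST hTfS) hgdS.
  exists (fun y => [/\ R y, y != 0 & T y^-1]); split.
    split.
    - by move=> y [].
    - by split; [exact: (sr1 R_sub)|exact: oner_neq0|rewrite invr1; exact: (sr1 hT)].
    - by case=> _ /eqP.
    - move=> x y [hx x0 hx'] [hy y0 hy']; split; first exact: (srM R_sub).
        by rewrite mulf_neq0.
      by rewrite invfM; apply: (srM hT).
  move=> x; split.
    move/heq => [s [mm [hs hmm ->]]].
    have mm0 := ms_nz hM hmm.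
    exists (s * t), (mm * t); split.
    - by apply: J_R => i; exact: (mM hs (ht i)).
    - split.
      + by apply: J_R => i; exact: (mM (ms_sub hM hmm) (ht i)).
      + by rewrite mulf_neq0.
      + rewrite invfM; apply: (srM hT) => //; apply/heq; exact: (loc_inv hS hM).
    - by field; rewrite mm0 t0.
  case=> [r [s [hr [hs s0 hs'] ->]]].
  by apply: (srM hT) => //; apply: hRT.
case: (classic (exists t, [/\ J t, t != 0 & T t^-1])) => [h|hno]; first exact: G1.
pose JT y := exists l : seq (K * K), (forall p, p \in l -> J p.1 /\ T p.2) /\
  y = \sum_(p <- l) p.1 * p.2.
have hJT : ideal T JT.
  split.
  - move=> _ [l [hl ->]]; rewrite big_seq; apply: (sr_sum (A:=T)) => // p /hl [h1 h2].
    by apply: (srM hT) => //; apply: hRT; apply: J_R.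
  - by exists [::]; split=> //; rewrite big_nil.
  - move=> _ _ [l1 [hl1 ->]] [l2 [hl2 ->]]; exists (l1 ++ l2); split; last by rewrite big_cat.
    by move=> p; rewrite mem_cat => /orP [/hl1|/hl2].
  - move=> c _ hc [l [hl ->]].
    exists [seq (p.1, c * p.2) | p <- l]; split.
      move=> p /mapP [q hq ->] /=; have [h1 h2] := hl q hq; split=> //.
      exact: (srM hT).
    by rewrite big_map mulr_sumr; apply: eq_bigr => p _ /=; rewrite mulrCA.
have hJ1 : ~ JT 1.
  move=> [l [hl e1]].
  have hST : subset_ S T.
    move=> s hs; rewrite -[s]mulr1 e1 mulr_sumr big_seq; apply: (sr_sum (A:=T)) => // p /hl [h1 h2].
    rewrite mulrA; apply: (srM hT) => //; apply: hRT; apply: J_R => i; exact: (mM hs (h1 i)).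
  have hgdS : going_down S T.
    apply: gd_S => // Q hQ; apply: NNPP => hnQ.
    case: hQ => [hQI hQ1 _]; apply: hQ1; rewrite e1.
    rewrite big_seq; elim/big_rec: _ => [|p w hp hw]; first exact: (idl0 hQI).
    apply: (idlD hQI) => //; apply: (idlMr hQI); last exact: (hl p hp).2.
    by apply: NNPP => hnp; apply: hnQ; exists p.1; split=> //; exact: (hl p hp).1.
  have [M [hM heq]] := hgS T (And3 hT hST hTfS) hgdS.
  have : forall l' : seq (K * K), (forall p, p \in l' -> J p.1 /\ T p.2) ->
      exists mm, M mm /\ J (mm * \sum_(p <- l') p.1 * p.2).
    elim=> [|[j z] l' IH] hl'.
      by exists 1; split; [exact: (ms1 hM)|rewrite big_nil mulr0 => i; apply: m0].
    have hl2 : forall p, p \in l' -> J p.1 /\ T p.2.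
      by move=> p hp; apply: hl'; rewrite inE hp orbT.
    have [mm [hmm hJmm]] := IH hl2.
    have [hj hz] := hl' (j, z) (mem_head _ _).
    have [s0 [m0' [hs0 hm0 ez]]] := (heq z).1 hz.
    have m00 := ms_nz hM hm0.
    exists (m0' * mm); split; first exact: (ms_mul hM).
    rewrite big_cons /=.
    have -> : m0' * mm * (j * z + \sum_(p <- l') p.1 * p.2) =
        mm * (j * (m0' * z)) + m0' * (mm * \sum_(p <- l') p.1 * p.2) by ring.
    have -> : m0' * z = s0 by rewrite ez mulrC divfK.
    move=> i; apply: mD.
      apply: mM; first exact: (ms_sub hM).
      by apply: mMr => //.
    by apply: mM => //; exact: (ms_sub hM).
  case/(_ l hl) => mm [hmm]; rewrite -e1 mulr1 => hJmm.
  apply: hno; exists mm; split=> //; first exact: (ms_nz hM).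
  by apply/heq; apply: (loc_inv hS hM).
have [Nm [hNmax hsub]] := exists_max hT hJT hJ1.
have hN := max_prime hT hNmax.
have hJN : subset_ J Nm.
  move=> j hj; apply: hsub; exists [:: (j, 1)]; split; last by rewrite big_seq1 mulr1.
  by move=> p; rewrite inE => /eqP -> /=; split=> //; exact: (sr1 hT).
set MM := (fun y => T y /\ ~ Nm y).
have hMM : mult_set T MM := prime_compl hT hN.
have hTl := loc_sub hT hMM.
have hTTl : subset_ T (localization T MM) by move=> x; apply: loc_in.
have hRTl : subset_ R (localization T MM) by move=> x /hRT /hTTl.
have hTlf : subset_ (localization T MM) (Defs.frac R).
  by move=> x /(loc_frac hMM); apply: frac_trans => //; exact: R_sub.
have hgdl := gd_loc R_sub hT hRT hgd hN.
have hdisj : forall s, MM s -> ~ Nm s by move=> s [].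
have hNl := ext_prime hT hMM hN hdisj.
have hUl : forall z, localization T MM z -> ~ ext MM Nm z -> localization T MM z^-1.
  move=> _ [a1 [s [ha1 hs ->]]] hnn.
  have hNa : ~ Nm a1 by move=> h; apply: hnn; exists a1, s.
  exists s, a1; split=> //; first by case: hs.
  by rewrite invf_div.
have hJl : subset_ J (ext MM Nm) by move=> j /hJN; apply: (ext_in hMM).
have hTR := coreB hTl hRTl hTlf hgdl hNl hUl hJl.
by apply: loc_trivial => // x /hTTl /hTR.
Qed.

Lemma main_conj : [/\ local_ring R, perinormal R,
      (globally_perinormal S -> globally_perinormal R),
      seteq (integral_closure R) S & ~ integrally_closed R].
Proof.
split.
- exact: local_R.
- exact: perinormal_R.
- exact: glob_R.
- exact: intcl_eq.
- exact: not_intcl.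
Qed.
End Main.

Theorem theorem5p2 (K : fieldType) (S : K -> Prop) (n : nat)
  (m : 'I_n -> K -> Prop) (k : fieldType) (a : 'I_n -> k -> K) :
  subring S ->
  generalized_Krull S ->
  (2 <= n)%N ->
  (forall i, maximal_ideal S (m i)) ->
  (forall i j, seteq (m i) (m j) -> i = j) ->
  (forall P, maximal_ideal S P -> exists i, seteq P (m i)) ->
  (forall j, height_ge2 S (m j)) ->
  (forall i, residue_iso S (m i) (a i)) ->
  let R := pullback_ring S m a in
  [/\ local_ring R,
      perinormal R,
      (globally_perinormal S -> globally_perinormal R),
      seteq (integral_closure R) S
    & ~ integrally_closed R].
Proof.
move=> hS hK hn hm hdist hall hht hres R.
exact: (main_conj hS hK hn hm hdist hall hht hres).
Qed.
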